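(* Let $a,b$ be Laurent polynomials with symmetry types $\mathrm{S}a(z)=\epsilon_az^{c_a}$ and $\mathrm{S}b(z)=\epsilon_bz^{c_b}$ ($\epsilon_a,\epsilon_b\in\{\pm1\}$, $c_a,c_b\in\mathbb Z$), with $b\neq0$. (i) If $\epsilon_a\epsilon_b=1$, or $c_a-c_b$ is odd (i.e. in each of the cases $\epsilon_a\epsilon_b=1$, $c_a-c_b$ odd; $\epsilon_a\epsilon_b=-1$, $c_a-c_b$ odd; $\epsilon_a\epsilon_b=1$, $c_a-c_b$ even), then one can construct a Laurent polynomial $q$ with symmetry such that $r(z):=a(z)-b(z)q(z)$ satisfies $\mathrm{len}(r)<\mathrm{len}(b)$ and $\mathrm{S}r(z)=\mathrm{S}a(z)=\mathrm{S}b(z)\,\mathrm{S}q(z)$. (ii) If $\epsilon_a\epsilon_b=-1$ and $c_a-c_b$ is even, then one can construct a Laurent polynomial $q$ with symmetry such that $r(z):=a(z)-b(z)q(z)$ satisfies $\mathrm{len}(r)\le\mathrm{len}(b)$ and $\mathrm{S}r(z)=\mathrm{S}a(z)=\mathrm{S}b(z)\,\mathrm{S}q(z)$.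
   Context: Laurent polynomial $u(z)=\sum_ku(k)z^k$ with finitely many nonzero complex coefficients. $u$ has symmetry of type $\epsilon z^c$ if $u(z)=\epsilon z^cu(z^{-1})$; for nonzero $u$, $\mathrm{S}u(z):=u(z)/u(z^{-1})$; the zero polynomial has symmetry of every type. For nonzero $u$, $\mathrm{len}(u):=\max\{k:u(k)\ne0\}-\min\{k:u(k)\neq0\}$, and $\mathrm{len}(0):=-\infty$. *)

(* Defs.v *)
From mathcomp Require Import all_boot all_algebra.
From mathcomp Require Import reals.
From mathcomp.real_closed Require Import complex.
Set Implicit Arguments. Unset Strict Implicit. Unset Printing Implicit Defensive.
Import GRing.Theory Num.Theory.
Local Open Scope ring_scope.

(* A Laurent polynomial over a ring K is represented by a pair (p, n)
   standing for z^(-n) * p(z).  Only its coefficient function [lcoef] is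
   ever inspected, so the non-uniqueness of the representation is harmless. *)
Definition laurent (K : nzRingType) := ({poly K} * nat)%type.

Definition lcoef (K : nzRingType) (u : laurent K) (k : int) : K :=
  match (k + (u.2)%:Z)%R with Posz m => u.1`_m | Negz _ => 0 end.

Definition lmul (K : nzRingType) (u v : laurent K) : laurent K :=
  (u.1 * v.1, (u.2 + v.2)%N).
Definition lsub (K : nzRingType) (u v : laurent K) : laurent K :=
  (u.1 * 'X^(v.2) - v.1 * 'X^(u.2), (u.2 + v.2)%N).

Definition lzero (K : nzRingType) (u : laurent K) := forall k, lcoef u k = 0.

(* u has symmetry of type eps z^c:  u(z) = eps z^c u(z^-1),
   i.e. coefficientwise u(k) = eps * u(c - k) for all k. *)
Definition lsym_type (K : nzRingType) (u : laurent K) (eps : K) (c : int) :=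
  forall k : int, lcoef u k = eps * lcoef u (c - k).

Definition is_len (K : nzRingType) (u : laurent K) (n : int) :=
  exists kmin kmax : int,
    [/\ lcoef u kmin != 0, lcoef u kmax != 0,
        (forall k, lcoef u k != 0 -> kmin <= k <= kmax) & n = kmax - kmin].

(* len(u) < len(v) and len(u) <= len(v), with len(0) = -oo *)
Definition len_lt (K : nzRingType) (u v : laurent K) :=
  (lzero u /\ ~ lzero v) \/
  exists nu nv, [/\ is_len u nu, is_len v nv & nu < nv].
Definition len_le (K : nzRingType) (u v : laurent K) :=
  lzero u \/ exists nu nv, [/\ is_len u nu, is_len v nv & nu <= nv].

(* Main.v *)
Require Import Defs.
From mathcomp Require Import all_boot all_algebra.
From mathcomp Require Import reals.
From mathcomp.real_closed Require Import complex.
From mathcomp Require Import zify ring.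
From Stdlib Require Import Classical.
Set Implicit Arguments. Unset Strict Implicit. Unset Printing Implicit Defensive.
Import GRing.Theory Num.Theory.
Local Open Scope ring_scope.
Definition pc (K : nzRingType) (p : {poly K}) (i : int) : K :=
  match i with Posz m => p`_m | Negz _ => 0 end.

Lemma pcE (K : nzRingType) (p : {poly K}) i :
  pc p i = if (0 <= i)%R then p`_(absz i) else 0.
Proof. by case: i. Qed.

Lemma lcoefE (K : nzRingType) (u : laurent K) k : lcoef u k = pc u.1 (k + u.2%:Z).
Proof. by []. Qed.

Lemma pc_mulXn (K : nzRingType) (p : {poly K}) (j : nat) i :
  pc (p * 'X^j) i = pc p (i - j%:Z).
Proof.
rewrite !pcE coefMXn.
case: ifP => h1; case: ifP => h2 //; try case: ifP => h3 //.
all: first [by congr (p`_ _); lia | by exfalso; lia].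
Qed.

Lemma pcD (K : nzRingType) (p q : {poly K}) i : pc (p + q) i = pc p i + pc q i.
Proof. by rewrite !pcE coefD; case: ifP; rewrite ?addr0. Qed.
Lemma pcB (K : nzRingType) (p q : {poly K}) i : pc (p - q) i = pc p i - pc q i.
Proof. by rewrite !pcE coefB; case: ifP; rewrite ?subr0. Qed.
Lemma pcZ (K : nzRingType) (a : K) (p : {poly K}) i : pc (a *: p) i = a * pc p i.
Proof. by rewrite !pcE coefZ; case: ifP; rewrite ?mulr0. Qed.
Lemma pc0 (K : nzRingType) i : pc (0 : {poly K}) i = 0.
Proof. by rewrite pcE coef0; case: ifP. Qed.

Definition ladd (K : nzRingType) (u v : laurent K) : laurent K :=
  (u.1 * 'X^(v.2) + v.1 * 'X^(u.2), (u.2 + v.2)%N).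
Definition mono (K : nzRingType) (a : K) (j : int) : laurent K :=
  (a *: 'X^(absz j), absz ((absz j)%:Z - j)).
Definition lnil (K : nzRingType) : laurent K := (0, 0%N).

Lemma lcoef_sub (K : nzRingType) (u v : laurent K) k :
  lcoef (lsub u v) k = lcoef u k - lcoef v k.
Proof.
rewrite !lcoefE /= pcB !pc_mulXn; congr (pc _ _ - pc _ _); lia.
Qed.

Lemma lcoef_add (K : nzRingType) (u v : laurent K) k :
  lcoef (ladd u v) k = lcoef u k + lcoef v k.
Proof.
rewrite !lcoefE /= pcD !pc_mulXn; congr (pc _ _ + pc _ _); lia.
Qed.

Lemma lcoef_mul_add (K : comNzRingType) (b u v : laurent K) k :
  lcoef (lmul b (ladd u v)) k = lcoef (lmul b u) k + lcoef (lmul b v) k.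
Proof.
rewrite !lcoefE /= mulrDr !mulrA pcD !pc_mulXn; congr (pc _ _ + pc _ _); lia.
Qed.

Lemma lcoef_mono (K : nzRingType) (a : K) j k :
  lcoef (mono a j) k = if k == j then a else 0.
Proof.
rewrite lcoefE /= pcZ pcE coefXn.
have [->|ne] := eqVneq k j.
  rewrite ifT; last lia.
  by rewrite (_ : _ == _) ?mulr1 //; apply/eqP; lia.
case: ifP => h; last by rewrite mulr0.
by rewrite (_ : _ == _ = false) ?mulr0 //; apply/eqP; lia.
Qed.

Lemma lcoef_mul_mono (K : comNzRingType) (b : laurent K) a j k :
  lcoef (lmul b (mono a j)) k = a * lcoef b (k - j).
Proof.
rewrite !lcoefE /= -scalerAr pcZ pc_mulXn; congr (_ * pc _ _); lia.
Qed.

Lemma lcoef_nil (K : nzRingType) k : lcoef (lnil K) k = 0.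
Proof. by rewrite lcoefE pc0. Qed.

Lemma lcoef_mul_nil (K : nzRingType) (b : laurent K) k : lcoef (lmul b (lnil K)) k = 0.
Proof. by rewrite lcoefE /= mulr0 pc0. Qed.
Definition supp (K : nzRingType) (f : int -> K) (lo hi : int) :=
  forall k, f k != 0 -> (lo <= k <= hi).

Lemma suppz (K : nzRingType) (f : int -> K) lo hi x :
  supp f lo hi -> (x < lo) || (hi < x) -> f x = 0.
Proof. move=> sf h; apply/eqP; apply/negPn/negP => hx; have /andP[h1 h2] := sf x hx; lia. Qed.

Lemma sym_r (K : nzRingType) (a b q : laurent K) ea ca :
  lsym_type a ea ca -> lsym_type (lmul b q) ea ca ->
  lsym_type (lsub a (lmul b q)) ea ca.
Proof. by move=> ha hbq k; rewrite !lcoef_sub ha hbq mulrBr. Qed.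

Lemma step1 (K : fieldType) (a b q : laurent K) ea eb ca cb m M s :
 (ea = 1 \/ ea = -1) -> (eb = 1 \/ eb = -1) ->
 lsym_type a ea ca -> lsym_type b eb cb ->
 lcoef b M != 0 -> supp (lcoef b) m M -> m + M = cb ->
 M - m < ca - 2*s ->
 lsym_type q (ea*eb) (ca-cb) -> lsym_type (lmul b q) ea ca ->
 supp (lcoef (lsub a (lmul b q))) s (ca - s) ->
 exists q', [/\ lsym_type q' (ea*eb) (ca-cb), lsym_type (lmul b q') ea ca &
   supp (lcoef (lsub a (lmul b q'))) (s+1) (ca - (s+1))].
Proof.
move=> hea heb ha hb bM0 sb mM W hq hbq sr.
have [t ht] : exists t, t = ca - s by eexists.
have [j hj] : exists j, j = t - M by eexists.
have [c hc] : exists c, c = ca - cb by eexists.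
rewrite -hc -ht in hq sr * .
pose al := lcoef (lsub a (lmul b q)) t / lcoef b M.
pose D := ladd (mono al j) (mono (al*(ea*eb)) (c - j)).
exists (ladd q D).
have hq' k : lcoef (ladd q D) k = lcoef q k + ((if k == j then al else 0)
    + (if k == c - j then al * (ea*eb) else 0)) by rewrite !lcoef_add !lcoef_mono.
have hbq' k : lcoef (lmul b (ladd q D)) k = lcoef (lmul b q) k +
   (al * lcoef b (k - j) + al*(ea*eb) * lcoef b (k - (c-j))).
  by rewrite !lcoef_mul_add !lcoef_mul_mono.
have symbq' : lsym_type (lmul b (ladd q D)) ea ca.
  move=> k; rewrite !hbq' hbq mulrDr; congr (_ + _).
  rewrite (hb (ca - k - j)) (hb (ca - k - (c - j))).
  rewrite (_ : cb - (ca - k - j) = k - (c - j)); last by lia.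
  rewrite (_ : cb - (ca - k - (c - j)) = k - j); last by lia.
  by case: hea => ->; case: heb => ->; ring.
have hr' k : lcoef (lsub a (lmul b (ladd q D))) k = lcoef (lsub a (lmul b q)) k -
   (al * lcoef b (k - j) + al*(ea*eb) * lcoef b (k - (c-j))).
  by rewrite !lcoef_sub hbq' opprD addrA.
have symr' := sym_r ha symbq'.
split => //.
  move=> k; rewrite !hq' hq mulrDr; congr (_ + _).
  have E1 : (c - k == j) = (k == c - j) by apply/eqP/eqP; lia.
  have E2 : (c - k == c - j) = (k == j) by apply/eqP/eqP; lia.
  rewrite E1 E2; case: (k == j); case: (k == c - j);
    by case: hea => ->; case: heb => ->; ring.
have zt : lcoef (lsub a (lmul b (ladd q D))) t = 0.
  rewrite hr' (_ : t - j = M); last by lia.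
  rewrite (suppz (x := t - (c - j)) sb); last by lia.
  by rewrite mulr0 addr0 /al divfK // subrr.
move=> k; apply: contraR => hk; apply/eqP.
have [->|nks] := eqVneq k s.
  by rewrite symr' -ht zt mulr0.
have [->|nkt] := eqVneq k t; first exact: zt.
rewrite hr' (suppz (x := k) sr); last by lia.
rewrite (suppz (x := k - j) sb); last by lia.
rewrite (suppz (x := k - (c - j)) sb); last by lia.
by rewrite !mulr0 addr0 subr0.
Qed.

Lemma step2 (K : fieldType) (a b q : laurent K) ea eb ca cb m M s :
 lsym_type a ea ca -> lsym_type b eb cb ->
 lcoef b M != 0 -> supp (lcoef b) m M -> m + M = cb ->
 ca - 2*s = M - m -> ea * eb = 1 ->
 lsym_type q (ea*eb) (ca-cb) -> lsym_type (lmul b q) ea ca ->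
 supp (lcoef (lsub a (lmul b q))) s (ca - s) ->
 exists q', [/\ lsym_type q' (ea*eb) (ca-cb), lsym_type (lmul b q') ea ca &
   supp (lcoef (lsub a (lmul b q'))) (s+1) (ca - (s+1))].
Proof.
move=> ha hb bM0 sb mM W he hq hbq sr.
have [t ht] : exists t, t = ca - s by eexists.
have [j hj] : exists j, j = t - M by eexists.
have [c hc] : exists c, c = ca - cb by eexists.
rewrite -hc -ht in hq sr * .
pose al := lcoef (lsub a (lmul b q)) t / lcoef b M.
pose D := mono al j.
exists (ladd q D).
have hq' k : lcoef (ladd q D) k = lcoef q k + (if k == j then al else 0)
  by rewrite !lcoef_add !lcoef_mono.
have hbq' k : lcoef (lmul b (ladd q D)) k = lcoef (lmul b q) k +
   al * lcoef b (k - j) by rewrite !lcoef_mul_add !lcoef_mul_mono.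
have symbq' : lsym_type (lmul b (ladd q D)) ea ca.
  move=> k; rewrite !hbq' hbq mulrDr; congr (_ + _).
  rewrite (hb (ca - k - j)).
  rewrite (_ : cb - (ca - k - j) = k - j); last by lia.
  by rewrite mulrCA (mulrA ea) he mul1r.
have hr' k : lcoef (lsub a (lmul b (ladd q D))) k = lcoef (lsub a (lmul b q)) k -
   al * lcoef b (k - j).
  by rewrite !lcoef_sub hbq' opprD addrA.
have symr' := sym_r ha symbq'.
split => //.
  move=> k; rewrite !hq' hq. rewrite he !mul1r; congr (_ + _).
  have E1 : (c - k == j) = (k == j) by apply/eqP/eqP; lia.
  by rewrite E1.
have zt : lcoef (lsub a (lmul b (ladd q D))) t = 0.
  rewrite hr' (_ : t - j = M); last by lia.
  by rewrite /al divfK // subrr.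
move=> k; apply: contraR => hk; apply/eqP.
have [->|nks] := eqVneq k s.
  by rewrite symr' -ht zt mulr0.
have [->|nkt] := eqVneq k t; first exact: zt.
rewrite hr' (suppz (x := k) sr); last by lia.
rewrite (suppz (x := k - j) sb); last by lia.
by rewrite !mulr0 subr0.
Qed.

Lemma iterate (K : fieldType) (a b : laurent K) ea eb ca cb m M T :
 (ea = 1 \/ ea = -1) -> (eb = 1 \/ eb = -1) ->
 lsym_type a ea ca -> lsym_type b eb cb ->
 lcoef b M != 0 -> supp (lcoef b) m M -> m + M = cb -> m <= M ->
 (forall s, T < ca - 2*s -> M - m < ca - 2*s \/ (ca - 2*s = M - m /\ ea*eb = 1)) ->
 forall (n : nat) q s, ca - 2*s < n%:Z ->
 lsym_type q (ea*eb) (ca-cb) -> lsym_type (lmul b q) ea ca ->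
 supp (lcoef (lsub a (lmul b q))) s (ca - s) ->
 exists q' s', [/\ lsym_type q' (ea*eb) (ca-cb), lsym_type (lmul b q') ea ca,
   supp (lcoef (lsub a (lmul b q'))) s' (ca - s') & ca - 2*s' <= T].
Proof.
move=> hea heb ha hb bM0 sb mM mleM hT.
elim=> [|n IH] q s hn hq hbq sr.
  have [hle|hlt] := lerP (ca - 2*s) T; first by exists q, s.
  by case: (hT s hlt) => [h|[h _]]; exfalso; lia.
have [hle|hlt] := lerP (ca - 2*s) T; first by exists q, s.
have [q' [hq' hbq' sr']] : exists q', [/\ lsym_type q' (ea*eb) (ca-cb),
   lsym_type (lmul b q') ea ca &
   supp (lcoef (lsub a (lmul b q'))) (s+1) (ca - (s+1))].
  case: (hT s hlt) => [h|[h he]].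
    exact: (step1 hea heb ha hb bM0 sb mM h hq hbq sr).
  exact: (step2 ha hb bM0 sb mM h he hq hbq sr).
apply: (IH q' (s+1)) => //; lia.
Qed.
Lemma supp_fin (K : nzRingType) (u : laurent K) :
  supp (lcoef u) (- (u.2)%:Z) ((size u.1)%:Z - (u.2)%:Z - 1).
Proof.
move=> k; rewrite lcoefE pcE; case: ifP => h; last by rewrite eqxx.
have [hs|hs] := leqP (size u.1) (absz (k + (u.2)%:Z)).
  by rewrite nth_default // eqxx.
move=> _; lia.
Qed.

Lemma exists_len (K : nzRingType) (f : int -> K) lo hi k0 :
  supp f lo hi -> f k0 != 0 ->
  exists kmin kmax, [/\ f kmin != 0, f kmax != 0, supp f kmin kmax,
     lo <= kmin & kmax <= hi].
Proof.
move=> sf h0.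
have := sf k0 h0 => /andP[l0 h0'].
have ex1 : exists i : nat, f (lo + i%:Z) != 0.
  by exists (absz (k0 - lo)); rewrite (_ : lo + _ = k0) //; lia.
have ex2 : exists i : nat, f (hi - i%:Z) != 0.
  by exists (absz (hi - k0)); rewrite (_ : hi - _ = k0) //; lia.
case: (ex_minnP ex1) => i0 hi0 hmin0.
case: (ex_minnP ex2) => i1 hi1 hmin1.
exists (lo + i0%:Z), (hi - i1%:Z); split => //; try lia.
move=> k hk; have /andP[l1 l2] := sf k hk.
have := hmin0 (absz (k - lo)); rewrite (_ : lo + _ = k); last by lia.
have := hmin1 (absz (hi - k)); rewrite (_ : hi - _ = k); last by lia.
move=> /(_ hk) a1 /(_ hk) a2; lia.
Qed.

Lemma nonzero_ex (K : nzRingType) (u : laurent K) : ~ lzero u -> exists k, lcoef u k != 0.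
Proof.
move=> h; case: (classic (exists k, lcoef u k != 0)) => // H.
exfalso; apply: h => k; apply/eqP/negP => hk; apply: H; exists k; exact/negP.
Qed.

Theorem lemma3p6 (R : realType) (a b : laurent R[i])
  (eps_a eps_b : R[i]) (c_a c_b : int)
  (heps_a : eps_a = 1 \/ eps_a = -1) (heps_b : eps_b = 1 \/ eps_b = -1)
  (ha : lsym_type a eps_a c_a) (hb : lsym_type b eps_b c_b) (hb0 : ~ lzero b) :
  ((eps_a * eps_b = 1 \/ odd `|c_a - c_b|%N) ->
     exists q : laurent R[i],
       let r := lsub a (lmul b q) in
       [/\ lsym_type q (eps_a * eps_b) (c_a - c_b), lsym_type r eps_a c_a
         & len_lt r b]) /\
  ((eps_a * eps_b = -1 /\ ~~ odd `|c_a - c_b|%N) ->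
     exists q : laurent R[i],
       let r := lsub a (lmul b q) in
       [/\ lsym_type q (eps_a * eps_b) (c_a - c_b), lsym_type r eps_a c_a
         & len_le r b]).
Proof.
have [k0 hk0] := nonzero_ex hb0.
have [m [M [bm0 bM0 sb _ _]]] := exists_len (@supp_fin _ b) hk0.
have mleM : m <= M by have /andP[] := sb m bm0; lia.
have mM : m + M = c_b.
  have h1 : lcoef b (c_b - m) != 0 by apply: contraNneq bm0 => h; rewrite hb h mulr0.
  have h2 : lcoef b (c_b - M) != 0 by apply: contraNneq bM0 => h; rewrite hb h mulr0.
  have := sb _ h1; have := sb _ h2; lia.
have lenb : is_len b (M - m) by exists m, M; split.
pose lo := - (a.2)%:Z; pose hi := (size a.1)%:Z - (a.2)%:Z - 1.
pose s0 : int := - `|lo| - `|c_a| - `|hi|.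
have hq0 : lsym_type (lnil R[i]) (eps_a * eps_b) (c_a - c_b).
  by move=> k; rewrite !lcoef_nil mulr0.
have hbq0 : lsym_type (lmul b (lnil R[i])) eps_a c_a.
  by move=> k; rewrite !lcoef_mul_nil mulr0.
have sr0 : supp (lcoef (lsub a (lmul b (lnil R[i])))) s0 (c_a - s0).
  move=> k; rewrite lcoef_sub lcoef_mul_nil subr0 => /(@supp_fin _ a k).
  rewrite /s0 -/lo -/hi; lia.
have hn : c_a - 2 * s0 < Posz (absz (c_a - 2 * s0)%R).+1 by lia.
have fin T : (forall s, T < c_a - 2*s -> M - m < c_a - 2*s \/
      (c_a - 2*s = M - m /\ eps_a*eps_b = 1)) ->
    exists q, [/\ lsym_type q (eps_a*eps_b) (c_a-c_b),
      lsym_type (lsub a (lmul b q)) eps_a c_a &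
      lzero (lsub a (lmul b q)) \/
      exists nr, is_len (lsub a (lmul b q)) nr /\ nr <= T].
  move=> hT.
  have [q [s [hq hbq sr hW]]] := iterate heps_a heps_b ha hb bM0 sb mM mleM hT hn
     hq0 hbq0 sr0.
  exists q; split => //; first exact: sym_r.
  case: (classic (exists k, lcoef (lsub a (lmul b q)) k != 0)) => [[k hk]|H].
    have [kmin [kmax [h1 h2 h3 h4 h5]]] := exists_len sr hk.
    right; exists (kmax - kmin); split; last by lia.
    by exists kmin, kmax; split.
  left => k; apply/eqP/negP => hk; apply: H; exists k; exact/negP.
split.
  move=> hyp.
  have hT : forall s, M - m - 1 < c_a - 2*s -> M - m < c_a - 2*s \/
      (c_a - 2*s = M - m /\ eps_a*eps_b = 1).
    move=> s hs.
    have [hgt|heq] : M - m < c_a - 2 * s \/ c_a - 2 * s = M - m by lia.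
      by left.
    right; split => //; case: hyp => // hodd; exfalso; lia.
  have [q [hq hr hl]] := fin _ hT.
  exists q; split => //.
  case: hl => [hz|[nr [hlen hnr]]]; first by left.
  by right; exists nr, (M - m); split => //; lia.
move=> [he hodd].
have [q [hq hr hl]] := fin (M - m) (fun s hs => or_introl hs).
exists q; split => //.
case: hl => [hz|[nr [hlen hnr]]]; first by left.
by right; exists nr, (M - m); split.
Qed.
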